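(* Let $I$ be a general ring and $a\in I$. Then $a$ is quasipolar in $I$ if and only if $a=s+q$ where $s\in I$ is strongly regular, $s\in\mathrm{comm}^2(a)$, $q\in QN(I)$, and $sq=qs=0$.
   Context: A general ring is an associative ring not necessarily having an identity. For $p,q\in I$, $p*q=p+q-pq$; $Q(I)=\{q\in I\mid p*q=0=q*p \text{ for some } p\in I\}$; $\mathrm{comm}(a)=\{x\in I\mid xa=ax\}$, $\mathrm{comm}^2(a)=\{x\in I\mid xy=yx\text{ for all }y\in\mathrm{comm}(a)\}$; $QN(I)=\{q\in I\mid qx\in Q(I)\text{ for every }x\in\mathrm{comm}(q)\}$. An element $a\in I$ is quasipolar in $I$ if there is an idempotent $p=p^2\in\mathrm{comm}^2(a)$ with $a+p\in Q(I)$ and $a-ap\in QN(I)$. An element $s\in I$ is strongly regular if $s=sbs$ for some $b\in I$ with $bs=sb$. *)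

(* Defs.v *)
(* A "general ring" = associative ring, not necessarily unital:
   an additive abelian group (zmodType) with an associative multiplication
   distributing over addition on both sides. *)
From HB Require Import structures.
From mathcomp Require Import all_boot all_order all_algebra.
Set Implicit Arguments. Unset Strict Implicit. Unset Printing Implicit Defensive.
Import GRing.Theory.
Local Open Scope ring_scope.

Record genRing := GenRing {
  gcarrier :> zmodType;
  gmul : gcarrier -> gcarrier -> gcarrier;
  gmulA : forall x y z, gmul x (gmul y z) = gmul (gmul x y) z;
  gmulDl : forall x y z, gmul (x + y) z = gmul x z + gmul y z;
  gmulDr : forall x y z, gmul x (y + z) = gmul x y + gmul x z
}.

Section Defs.
Variable I : genRing.
Local Notation "x ** y" := (gmul x y) (at level 40, left associativity).

Definition circ (p q : I) : I := p + q - p ** q.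

Definition inQ (q : I) : Prop := exists p : I, circ p q = 0 /\ circ q p = 0.

Definition in_comm (a x : I) : Prop := x ** a = a ** x.

Definition in_comm2 (a x : I) : Prop :=
  forall y : I, in_comm a y -> x ** y = y ** x.

Definition inQN (q : I) : Prop := forall x : I, in_comm q x -> inQ (q ** x).

Definition quasipolar (a : I) : Prop :=
  exists p : I, [/\ p ** p = p, in_comm2 a p, inQ (a + p) & inQN (a - a ** p)].

Definition strongly_regular (s : I) : Prop :=
  exists b : I, s = s ** b ** s /\ b ** s = s ** b.
End Defs.

(* Main.v *)
Require Import Defs.
From HB Require Import structures.
From mathcomp Require Import all_boot all_order all_algebra.
Import GRing.Theory.
Local Open Scope ring_scope.

Section H.
Variable I : genRing.
Local Notation "x ** y" := (gmul x y) (at level 40, left associativity).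
Implicit Types x y z : I.

Lemma gmul0r x : 0 ** x = 0.
Proof. by apply/(addrI (0**x)); rewrite -gmulDl !addr0. Qed.
Lemma gmulr0 x : x ** 0 = 0.
Proof. by apply/(addrI (x**0)); rewrite -gmulDr !addr0. Qed.
Lemma gmulNl x y : (- x) ** y = - (x ** y).
Proof. by apply/(addrI (x**y)); rewrite -gmulDl !subrr gmul0r. Qed.
Lemma gmulNr x y : x ** (- y) = - (x ** y).
Proof. by apply/(addrI (x**y)); rewrite -gmulDr !subrr gmulr0. Qed.
Lemma gmulBl x y z : (x - y) ** z = x ** z - y ** z.
Proof. by rewrite gmulDl gmulNl. Qed.
Lemma gmulBr x y z : x ** (y - z) = x ** y - x ** z.
Proof. by rewrite gmulDr gmulNr. Qed.

Ltac gn := rewrite ?(gmulDl, gmulDr, gmulBl, gmulBr, gmulNl, gmulNr, gmul0r, gmulr0, gmulA).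
Ltac zstep := lazymatch goal with
 | |- ?S' + (- ?t) = 0 => progress (do 30 try rewrite (addrAC _ t); rewrite ?subrK ?addrK)
 | |- ?S' + ?z = 0 => progress (do 30 try rewrite (addrAC _ (- z)); rewrite ?subrK ?addrK)
end.
Ltac zsolve := apply/eqP; rewrite -subr_eq0; apply/eqP; rewrite ?opprD ?opprK ?oppr0 ?addr0 ?add0r -(add0r (_ + _)) ?addrA; repeat zstep; try done.
Lemma forward (a : I) : quasipolar a ->
  exists s q : I,
    [/\ a = s + q, strongly_regular s, in_comm2 a s, inQN q
      & gmul s q = 0 /\ gmul q s = 0].
Proof.
case=> p [Hp Hc2 [u [HL HR]] HQN].
have pa : p ** a = a ** p by apply: Hc2.
have uap : u ** a ** p = a ** p + p.
  have := congr1 (fun x => x ** p) HL; rewrite /circ /=; gn; rewrite -[u ** p ** p]gmulA Hp.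
  move/subr0_eq. rewrite [RHS]addrC => /addrI; done.
have apu : a ** p ** u = a ** p + p.
  have := congr1 (fun x => p ** x) HR; rewrite /circ /=; gn; rewrite Hp pa.
  by move/subr0_eq/addIr.
have app : a ** p ** p = a ** p by rewrite -gmulA Hp.
have apa : a ** p ** a = a ** a ** p by rewrite -gmulA pa gmulA.
have pap : p ** a ** p = a ** p by rewrite pa app.
exists (a ** p), (a - a ** p); split.
- by rewrite addrC subrK.
- exists (p ** u ** p - p).
  have sb : a ** p ** (p ** u ** p - p) = p.
    gn; rewrite !app apu; gn; rewrite app Hp.
    by rewrite addrC addKr.
  have bs : (p ** u ** p - p) ** (a ** p) = p.
    gn; rewrite pap -[p ** u ** p ** a]gmulA pa gmulA -[p ** u ** a ** p ** p]gmulA Hp.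
    rewrite -[p ** u ** a]gmulA -[p ** (u ** a) ** p]gmulA uap; gn.
    by rewrite pap Hp addrC addKr.
  by rewrite sb bs gmulA pap.
- move=> y Hy. by rewrite -gmulA (Hc2 y Hy) gmulA -Hy -gmulA.
- exact: HQN.
- split; gn; rewrite ?apa -?[a ** a ** p ** p]gmulA ?Hp ?subrr //.
Qed.
Lemma inQ_core (s q g p w : I)
 (ps: p**s = s) (sp: s**p = s) (pp: p**p = p) (pq: p**q=0) (qp: q**p=0) (gs: g**s = p)
 (sg: s**g = p) (gp: g**p = g) (pg: p**g = g) (gq: g**q = 0) (qg: q**g = 0) (ws: w**s = 0)
 (sw: s**w = 0) (wp: w**p=0) (pw: p**w=0) (wg: w**g = 0) (gw: g**w = 0)
 (Hw1: circ w q = 0) (Hw2: circ q w = 0) : inQ (s + q + p).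
Proof.
exists (p + g + w); rewrite /circ; split; gn; rewrite ?ps ?sp ?pp ?pq ?qp ?gs ?sg ?gp ?pg ?gq ?qg ?ws ?sw ?wp ?pw ?wg ?gw ?addr0 ?add0r.
- rewrite -Hw1 /circ; zsolve.
- rewrite -Hw2 /circ; zsolve.
Qed.

Lemma gcomm (s g p y : I) (ggs : g**g**s = g) (gs : g**s = p) (ps: p**s = s) (sp: s**p = s)
  (sgg : s**g**g = g) (sg: s**g = p) (Hy : s**y = y**s) : g**y = y**g.
Proof.
have e1 : g**y = g**g**y**s by rewrite -{1}ggs -gmulA Hy gmulA.
have gyp : g**y**p = g**y by rewrite e1 -gmulA sp.
have e2 : g**y**p = p**y**g by rewrite -{1}sg gmulA -[g**y**s]gmulA -Hy gmulA gs.
have e3 : y**g = s**y**g**g by rewrite -{1}sgg !gmulA -Hy.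
have e4 : p**y**g = s**y**g**g by rewrite -{1}sgg !gmulA -[p**y**s]gmulA -Hy gmulA ps.
by rewrite -gyp e2 e4 e3.
Qed.

Lemma circ_lr (w q w' : I) : circ w q = 0 -> circ q w' = 0 -> w = w'.
Proof.
move=> H1 H2.
have h : q**w' - w**q = (circ w q)**w' - w**(circ q w') by rewrite /circ; gn; zsolve.
rewrite H1 H2 gmul0r gmulr0 subrr in h.
have h2 : w - w' = (circ w q - circ q w') + (w**q - q**w') by rewrite /circ; zsolve.
move/eqP: h; rewrite subr_eq0 => /eqP h.
by apply/eqP; rewrite -subr_eq0 h2 H1 H2 h !subrr addr0.
Qed.

Lemma backward (a : I) : (exists s q : I,
    [/\ a = s + q, strongly_regular s, in_comm2 a s, inQN q
      & gmul s q = 0 /\ gmul q s = 0]) -> quasipolar a.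
Proof.
case=> s [q [Ha [b [Hsbs Hbs]] Hc2 HQN [sq qs]]].
have sbs : s**b**s = s by [].
have bs' x : x**b**s = x**s**b by rewrite -gmulA Hbs gmulA.
have ssb : s**s**b = s by rewrite -gmulA -Hbs gmulA.
have ssb' x : x**s**s**b = x**s by rewrite -[x**s**s]gmulA -gmulA ssb.
have pp : s**b**(s**b) = s**b by rewrite gmulA sbs.
have sp : s**(s**b) = s by rewrite gmulA ssb.
have pq : s**b**q = 0 by rewrite -Hbs -gmulA sq gmulr0.
have qp : q**(s**b) = 0 by rewrite gmulA qs gmul0r.
have gs : s**b**b**s = s**b by rewrite bs' sbs.
have sg : s**(s**b**b) = s**b by rewrite !gmulA ssb.
have gp : s**b**b**(s**b) = s**b**b by rewrite !gmulA bs' sbs.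
have pg : s**b**(s**b**b) = s**b**b by rewrite !gmulA sbs.
have gq : s**b**b**q = 0 by rewrite -Hbs -[b**s**b]gmulA -Hbs gmulA -gmulA sq gmulr0.
have qg : q**(s**b**b) = 0 by rewrite !gmulA qs !gmul0r.
have ggs : s**b**b**(s**b**b)**s = s**b**b by rewrite -gmulA gs gp.
have sgg : s**(s**b**b)**(s**b**b) = s**b**b by rewrite sg pg.
move: (s**b) (s**b**b) sbs pp sp pq qp gs sg gp pg gq qg ggs sgg => p g ps pp sp pq qp gs sg gp pg gq qg ggs sgg.
have [v [Hv1 Hv2]] : exists v, circ v (q**q) = 0 /\ circ (q**q) v = 0 := HQN q (erefl _).
have Hw1 : circ (v - q + v**q) q = 0.
  by rewrite -Hv1 /circ; gn; zsolve.
have Hw2 : circ q (v - q + q**v) = 0 by rewrite -Hv2 /circ; gn; zsolve.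
have ww := circ_lr _ _ _ Hw1 Hw2.
have vp : v**p = 0.
  have := congr1 (fun x => x**p) Hv1; rewrite /circ; gn; rewrite -!gmulA qp !gmulr0.
  by rewrite subr0 addr0.
have pv : p**v = 0.
  have := congr1 (fun x => p**x) Hv2; rewrite /circ; gn; rewrite pq !gmul0r.
  by rewrite subr0 add0r.
have pw : p**(v - q + v**q) = 0.
  by gn; rewrite pv pq gmul0r subr0 addr0.
have wp : (v - q + v**q)**p = 0 by rewrite ww; gn; rewrite vp qp -gmulA vp gmulr0 subr0 addr0.
move: (v - q + v**q) Hw1 pw wp => w Hw1 pw wp.
have Hw2' : circ q w = 0 by rewrite (circ_lr _ _ _ Hw1 Hw2).
have ws : w**s = 0 by rewrite -ps gmulA wp gmul0r.
have sw : s**w = 0 by rewrite -sp -gmulA pw gmulr0.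
have wg : w**g = 0 by rewrite -pg gmulA wp gmul0r.
have gw : g**w = 0 by rewrite -gp -gmulA pw gmulr0.
exists p; split => //.
- move=> y Hy; have Hsy := Hc2 y Hy.
  have Hgy := gcomm _ _ _ _ ggs gs ps sp sgg sg Hsy.
  by rewrite -sg -gmulA Hgy gmulA Hsy -gmulA.
- rewrite Ha; exact: (inQ_core s q g p w ps sp pp pq qp gs sg gp pg gq qg ws sw wp pw wg gw Hw1 Hw2').
- by rewrite Ha gmulDl sp qp addr0 addrC addKr.
Qed.

End H.

Theorem theorem2p16 (I : genRing) (a : I) :
  quasipolar a <->
  exists s q : I,
    [/\ a = s + q, strongly_regular s, in_comm2 a s, inQN q
      & gmul s q = 0 /\ gmul q s = 0].
Proof. split; [exact: forward | exact: backward]. Qed.
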